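(* Let $k\geq 8$ and $3k\leq n\leq 4k$ be integers, and let $h(n,k)=\binom{n-1}{k-1}-\binom{n-k-1}{k-1}+1$. Then \[ \binom{n}{k-2}+\frac{h(n,k)^2}{\binom{n}{k-2}}>2\binom{n-1}{k-1}. \] *)

(* Defs.v *)
From mathcomp Require Import all_boot all_order all_algebra.
Set Implicit Arguments. Unset Strict Implicit. Unset Printing Implicit Defensive.
Import Order.TTheory GRing.Theory Num.Theory.
Local Open Scope ring_scope.

Definition h (n k : nat) : rat :=
  ('C(n.-1, k.-1))%:R - ('C((n - k).-1, k.-1))%:R + 1.

(* Main.v *)
Require Import Defs.
From mathcomp Require Import all_boot all_order all_algebra.
From mathcomp Require Import ring lra zify.
Import Order.TTheory GRing.Theory Num.Theory.
Local Open Scope ring_scope.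

Definition Pk (n k : nat) : Prop :=
  let nr := n%:R : rat in let kr := k%:R : rat in
  2 * ((nr - kr - 1)/(nr - 1))^+(k.-1) <= (1 - nr*(kr-1)/((nr-kr+2)*(nr-kr+1)))^+2.

Lemma clear_den (P Q N D : rat) e : 0 < Q -> 0 < D ->
  2 * P^+e * D^+2 <= (D-N)^+2 * Q^+e -> 2 * (P/Q)^+e <= (1 - N/D)^+2.
Proof.
move=> hQ hD h.
have -> : 1 - N/D = (D-N)/D by field; rewrite gt_eqF.
rewrite !expr_div_n mulrA ler_pdivlMr ?exprn_gt0 //.
rewrite mulrAC ler_pdivrMr ?exprn_gt0 //.
Qed.

Ltac solve_case :=
  rewrite /Pk /= ?natrD ?natrM;
  apply: clear_den; lra.

Lemma small_case n k j : (8 <= k <= 13)%N -> (j <= k)%N -> n = (3*k+j)%N -> Pk n k.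
Proof.
case/andP=> h1 h2 hj ->.
have : k \in [:: 8; 9; 10; 11; 12; 13]%N.
  rewrite !inE; apply/orP; lia.
move: hj; rewrite !inE => hj.
move=> /orP[/eqP Ek|/orP[/eqP Ek|/orP[/eqP Ek|/orP[/eqP Ek|/orP[/eqP Ek|/eqP Ek]]]]]; subst k;
do 14 (case: j hj => [|j] hj; [first [exfalso; lia | solve_case]|]); exfalso; lia.
Qed.

Lemma large_case n k : (14 <= k)%N -> (3*k <= n)%N -> (n <= 4*k)%N -> Pk n k.
Proof.
move=> hk h1 h2; rewrite /Pk.
have hkr : 14 <= k%:R :> rat by rewrite (ler_nat rat 14 k).
have h1r : 3 * k%:R <= n%:R :> rat by rewrite -natrM ler_nat.
have h2r : n%:R <= 4 * k%:R :> rat by rewrite -natrM ler_nat.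
set nr := n%:R : rat; set kr := k%:R : rat.
set x := (nr - kr - 1) / (nr - 1).
set y := nr * (kr - 1) / ((nr - kr + 2) * (nr - kr + 1)).
have hx0 : 0 <= x by rewrite /x divr_ge0 //; lra.
have hx1 : x <= 3/4 by rewrite /x ler_pdivrMr; lra.
have hy0 : 0 <= y by rewrite /y divr_ge0 //; nra.
have hy1 : y <= 3/4.
  rewrite /y ler_pdivrMr; last by nra.
  nra.
have e1 : x ^+ k.-1 <= (3/4) ^+ k.-1 by rewrite lerXn2r // nnegrE //.
have e2 : (3/4 : rat) ^+ k.-1 <= (3/4) ^+ 13.
  by apply: ler_wiXn2l => //; lia.
have e3 : (3/4 : rat) ^+ 13 <= 1/32 by lra.
have e4 : 1/16 <= (1 - y)^+2 by nra.
lra.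
Qed.

Lemma binB n k : (2 <= k)%N -> (k <= n)%N ->
  ('C(n, k-2) * ((n-k+2)*(n-k+1)) = 'C(n.-1,k.-1) * (n*(k-1)))%N.
Proof.
case: k => [|[|K]] // _ hK.
have -> : (K.+2 - 2 = K)%N by lia.
have -> : (n - K.+2 + 2 = n - K)%N by lia.
have -> : (n - K.+2 + 1 = n - K.+1)%N by lia.
have -> : (K.+2 - 1 = K.+1)%N by lia.
have e1 := mul_bin_left n K; have e2 := mul_bin_down n K.+1.
move: e1 e2; rewrite /=.
set C0 := 'C(n, K); set C1 := 'C(n, K.+1); set C2 := 'C(n.-1, K.+1).
move: (n - K)%N (n - K.+1)%N => u v e1 e2.
have -> : (C0 * (u * v) = (u * C0) * v)%N by ring.
rewrite -e1.
have -> : (K.+1 * C1 * v = K.+1 * (v * C1))%N by ring.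
rewrite -e2; ring.
Qed.

Lemma bin_ratio r : forall a b, (a <= b)%N ->
  'C(a,r)%:R * (b%:R)^+r <= 'C(b,r)%:R * (a%:R)^+r :> rat.
Proof.
elim: r => [|r IH] a b hab; first by rewrite !bin0 !expr0.
case: a hab => [|a'] hab.
  by rewrite bin0n /= mul0r mulr_ge0 ?exprn_ge0.
case: b hab => [//|b'] hab.
have hab' : (a' <= b')%N by [].
have key : 'C(a', r)%:R * (b'.+1)%:R ^+ r <= 'C(b', r)%:R * (a'.+1)%:R ^+ r :> rat.
  case: b' hab hab' => [|b''] hab hab'.
    by have -> : a' = 0%N by lia.
  have hb : 0 < (b''.+1)%:R ^+ r :> rat by rewrite exprn_gt0 // ltr0n.
  have I1 := IH _ _ hab'.
  have hp : (a'%:R * (b''.+2)%:R) ^+ r <= ((a'.+1)%:R * (b''.+1)%:R) ^+ r :> rat.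
    rewrite lerXn2r // ?nnegrE ?mulr_ge0 // -!natrM ler_nat; nia.
  rewrite !exprMn in hp.
  have c1 : 0 <= 'C(b''.+1, r)%:R :> rat by [].
  have d1 : 0 <= (b''.+2)%:R ^+ r :> rat by rewrite exprn_ge0.
  have p1 := ler_wpM2r d1 I1.
  have p2 := ler_wpM2l c1 hp.
  rewrite -(ler_pM2r hb).
  move: hb p1 p2.
  set A0 := 'C(a', r)%:R; set B0 := 'C(b''.+1, r)%:R.
  set P' := a'%:R ^+ r; set P := (a'.+1)%:R ^+ r; set Q' := (b''.+1)%:R ^+ r; set Q := (b''.+2)%:R ^+ r.
  move=> hb p1 p2; nra.
have ea := mul_bin_diag a'.+1 r; have eb := mul_bin_diag b'.+1 r.
rewrite /= in ea eb.
have hr : 0 < (r.+1)%:R :> rat by rewrite ltr0n.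
rewrite -(ler_pM2l hr) !mulrA -!natrM -ea -eb !natrM !exprS.
have hab0 : 0 <= (a'.+1)%:R * (b'.+1)%:R :> rat by rewrite mulr_ge0.
have p := ler_wpM2l hab0 key.
move: p; set A0 := 'C(a', r)%:R; set B0 := 'C(b', r)%:R.
set a := (a'.+1)%:R; set b := (b'.+1)%:R; set P := a ^+ r; set Q := b ^+ r.
move=> p; nra.
Qed.

Lemma main_ineq n k : (8 <= k)%N -> (3 * k <= n)%N -> (n <= 4 * k)%N -> Pk n k ->
  ('C(n, k - 2))%:R + h n k ^+ 2 / ('C(n, k - 2))%:R
    > 2 * ('C(n.-1, k.-1))%:R :> rat.
Proof.
move=> hk h1 h2 hP.
rewrite /h /Pk in hP *.
have hA : 0 < 'C(n.-1, k.-1)%:R :> rat by rewrite ltr0n bin_gt0; lia.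
have hB : 0 < 'C(n, k-2)%:R :> rat by rewrite ltr0n bin_gt0; lia.
have eB := @binB n k.
have eBr : 'C(n, k-2)%:R * ((n-k+2)*(n-k+1))%:R = 'C(n.-1, k.-1)%:R * (n*(k-1))%:R :> rat.
  by rewrite -!natrM eB //; lia.
have hC := @bin_ratio k.-1 (n-k).-1 n.-1 ltac:(lia).
have ea : ((n-k).-1)%:R = n%:R - k%:R - 1 :> rat.
  have e : ((n-k).-1 + k + 1 = n)%N by lia.
  have := congr1 (fun m => m%:R : rat) e; rewrite /= !natrD => <-; lra.
have eb : (n.-1)%:R = n%:R - 1 :> rat.
  have e : (n.-1 + 1 = n)%N by lia.
  have := congr1 (fun m => m%:R : rat) e; rewrite /= !natrD => <-; lra.
have eN : (n*(k-1))%:R = n%:R * (k%:R - 1) :> rat.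
  have e : (k - 1 + 1 = k)%N by lia.
  rewrite natrM; congr (_ * _).
  have := congr1 (fun m => m%:R : rat) e; rewrite /= !natrD => <-; lra.
have eD : ((n-k+2)*(n-k+1))%:R = (n%:R - k%:R + 2) * (n%:R - k%:R + 1) :> rat.
  have e : (n - k + k = n)%N by lia.
  rewrite !natrM !natrD.
  have := congr1 (fun m => m%:R : rat) e; rewrite /= !natrD => <-; lra.
rewrite ea eb in hC.
rewrite eN eD in eBr.
have hkr : 8 <= k%:R :> rat by rewrite (ler_nat rat 8 k).
have h1r : 3 * k%:R <= n%:R :> rat by rewrite -natrM ler_nat.
move: hP hC eBr.
set Ar := 'C(n.-1, k.-1)%:R; set Br := 'C(n, k-2)%:R; set Cr := 'C((n-k).-1, k.-1)%:R.
set nr := n%:R : rat; set kr := k%:R : rat.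
set D := (nr - kr + 2) * (nr - kr + 1).
set Y := nr * (kr - 1) / D.
set X := ((nr - kr - 1) / (nr - 1)) ^+ k.-1.
move=> hP hC eBr.
have hD : 0 < D by rewrite /D; nra.
have eY : Br = Ar * Y by rewrite /Y mulrA -eBr mulfK // gt_eqF.
have hQ : 0 < (nr - 1) ^+ k.-1 by rewrite exprn_gt0 //; lra.
have hCX : Cr <= Ar * X.
  rewrite /X expr_div_n mulrA ler_pdivlMr //.
have C0 : 0 <= Cr by [].
have t1 : 2 * Ar * Cr <= Ar ^+ 2 * (1 - Y) ^+ 2.
  have q1 := ler_wpM2l (ltW hA) hCX.
  have q2 := ler_wpM2l (mulr_ge0 (ltW hA) (ltW hA)) hP.
  nra.
have g : 2 * Ar * Br < Br ^+ 2 + (Ar - Cr + 1) ^+ 2.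
  rewrite eY.
  have sq : 0 <= (Cr - 1) ^+ 2 by apply: sqr_ge0.
  clearbody X Y; move: t1 sq hA; clear.
  move=> t1 sq hA; nra.
rewrite -(ltr_pM2r hB) -/Br [X in _ < X]mulrDl divfK ?gt_eqF // -expr2.
Qed.

Theorem lemma2p10 (n k : nat) (hk : (8 <= k)%N) (hn1 : (3 * k <= n)%N)
  (hn2 : (n <= 4 * k)%N) :
  ('C(n, k - 2))%:R + h n k ^+ 2 / ('C(n, k - 2))%:R
    > 2 * ('C(n.-1, k.-1))%:R :> rat.
Proof.
apply: main_ineq => //.
have [hs|hl] := leqP k 13.
  apply: (@small_case n k (n - 3 * k)); lia.
apply: large_case => //.
Qed.
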